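(* For any $i,j\in[n]$ the real line bundles $E_{2,i}(L)$ and $E_{2,j}(L)$ over $M_2(L)$ are isomorphic.
   Context: Let $n\ge 4$, $[n]=\{1,\dots,n\}$, and $L=(l_1,\dots,l_n)$ with all $l_i>0$, generic in the sense that $\sum_{i\in I}\pm l_i\neq 0$ for every nonempty $I\subseteq[n]$ and every choice of signs. Let $\widetilde M_2(L)=\{(u_1,\dots,u_n)\in(S^1)^n:\sum_i l_iu_i=0\}$ and $M_2(L)=\widetilde M_2(L)/O(2)$, a smooth closed manifold of dimension $n-3$. The tautological line bundle $E_{2,i}(L)$ is the real line bundle over $M_2(L)$ obtained as the quotient by $O(2)$ of the bundle over $\widetilde M_2(L)$ whose fiber at $(u_1,\dots,u_n)$ is the tangent line $T_{u_i}S^1$. *)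

(* Defs.v *)
From mathcomp Require Import all_boot all_order all_algebra.
From mathcomp Require Import boolp classical_sets reals.
Set Implicit Arguments. Unset Strict Implicit. Unset Printing Implicit Defensive.
Import Order.TTheory GRing.Theory Num.Theory.
Local Open Scope ring_scope.
Local Open Scope classical_set_scope.

(* An element of O(2): [[c, -e s], [s, e c]] with c^2 + s^2 = 1 and
   e = -1 if o2refl is true (reflection), e = 1 otherwise (rotation). *)
Record O2 (R : realType) := MkO2 {
  o2c : R; o2s : R; o2refl : bool;
  o2_unit : o2c ^+ 2 + o2s ^+ 2 = 1 }.

Definition o2act (R : realType) (g : O2 R) (x : R * R) : R * R :=
  let e : R := if o2refl g then -1 else 1 in
  (o2c g * x.1 - e * o2s g * x.2, o2s g * x.1 + e * o2c g * x.2).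

Definition config (R : realType) (n : nat) := 'I_n -> R * R.

Definition Mtilde (R : realType) (n : nat) (l : 'I_n -> R) : set (config R n) :=
  [set u | (forall k, (u k).1 ^+ 2 + (u k).2 ^+ 2 = 1) /\
           \sum_k l k * (u k).1 = 0 /\ \sum_k l k * (u k).2 = 0].

(* total space of the bundle over \tilde M_2(L) with fiber T_{u_i} S^1
   (the line in R^2 orthogonal to u_i) *)
Definition Etilde (R : realType) (n : nat) (l : 'I_n -> R) (i : 'I_n)
  : set (config R n * (R * R)) :=
  [set x | Mtilde l x.1 /\ (x.1 i).1 * x.2.1 + (x.1 i).2 * x.2.2 = 0].

Definition act_cfg (R : realType) (n : nat) (g : O2 R) (u : config R n)
  : config R n := fun k => o2act g (u k).
Definition act_tot (R : realType) (n : nat) (g : O2 R) (x : config R n * (R * R))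
  : config R n * (R * R) := (act_cfg g x.1, o2act g x.2).

Definition orbit_cfg (R : realType) (n : nat) (u : config R n) : set (config R n) :=
  range (fun g : O2 R => act_cfg g u).
Definition orbit_tot (R : realType) (n : nat) (x : config R n * (R * R))
  : set (config R n * (R * R)) :=
  range (fun g : O2 R => act_tot g x).

(* M_2(L) = \tilde M_2(L) / O(2), points are O(2)-orbits *)
Definition M2 (R : realType) (n : nat) (l : 'I_n -> R) : set (set (config R n)) :=
  (@orbit_cfg R n) @` Mtilde l.

Definition E2 (R : realType) (n : nat) (l : 'I_n -> R) (i : 'I_n)
  : set (set (config R n * (R * R))) :=
  (@orbit_tot R n) @` Etilde l i.

Definition bproj (R : realType) (n : nat) (C : set (config R n * (R * R)))
  : set (config R n) := [set u | exists v, C (u, v)].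

(* metrics inducing the standard topologies on (R^2)^n and (R^2)^n x R^2 *)
Definition dist_cfg (R : realType) (n : nat) (u u' : config R n) : R :=
  \sum_k (`|(u k).1 - (u' k).1| + `|(u k).2 - (u' k).2|).
Definition dist_tot (R : realType) (n : nat) (x y : config R n * (R * R)) : R :=
  dist_cfg x.1 y.1 + `|x.2.1 - y.2.1| + `|x.2.2 - y.2.2|.

Definition rel_open (R : realType) (T : Type) (d : T -> T -> R) (S U : set T) :=
  forall x, S x -> U x -> exists2 e : R, 0 < e & forall y, S y -> d x y < e -> U y.

(* quotient topology on orb @` S: a family F of orbits is open iff its
   preimage in S is open in S *)
Definition quot_open (R : realType) (T : Type) (d : T -> T -> R) (S : set T)
  (orb : T -> set T) (F : set (set T)) :=
  rel_open d S [set x | S x /\ F (orb x)].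

Definition quot_cont (R : realType) (T : Type) (d : T -> T -> R)
  (S1 S2 : set T) (orb : T -> set T) (f : set T -> set T) :=
  forall F, quot_open d S2 orb F -> quot_open d S1 orb [set C | F (f C)].

Definition vadd (R : realType) (a : R) (v w : R * R) : R * R :=
  (a * v.1 + w.1, a * v.2 + w.2).

(* Phi : E_{2,i}(L) -> E_{2,j}(L) is an isomorphism of real line bundles
   over M_2(L), with inverse Psi: a homeomorphism of total spaces commuting
   with the projections and linear on each fiber (the linear structure on
   the fiber over [u] being the one transported from T_{u_i}S^1 via
   v |-> [u, v]). *)
Definition line_bundle_iso (R : realType) (n : nat) (l : 'I_n -> R) (i j : 'I_n)
  (Phi Psi : set (config R n * (R * R)) -> set (config R n * (R * R))) :=
  (forall C, E2 l i C -> E2 l j (Phi C)) /\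
      (forall C, E2 l j C -> E2 l i (Psi C)) /\
      (forall C, E2 l i C -> Psi (Phi C) = C) /\
      (forall C, E2 l j C -> Phi (Psi C) = C) /\
      (forall C, E2 l i C -> bproj (Phi C) = bproj C) /\
      (forall u (a : R) v w v' w',
         Etilde l i (u, v) -> Etilde l i (u, w) ->
         Etilde l j (u, v') -> Etilde l j (u, w') ->
         Phi (orbit_tot (u, v)) = orbit_tot (u, v') ->
         Phi (orbit_tot (u, w)) = orbit_tot (u, w') ->
         Phi (orbit_tot (u, vadd a v w)) = orbit_tot (u, vadd a v' w')) /\
      quot_cont (@dist_tot R n) (Etilde l i) (Etilde l j) (@orbit_tot R n) Phi /\
      quot_cont (@dist_tot R n) (Etilde l j) (Etilde l i) (@orbit_tot R n) Psi.

(* Main.v *)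
Require Import Defs.
From mathcomp Require Import all_boot all_order all_algebra.
From mathcomp Require Import boolp classical_sets reals.
From mathcomp Require Import ring lra.
Set Implicit Arguments. Unset Strict Implicit.
Import Order.TTheory GRing.Theory Num.Theory.
Local Open Scope ring_scope.
Local Open Scope classical_set_scope.

Definition crs (R : realType) (a b : R * R) : R := a.1 * b.2 - a.2 * b.1.
Definition Tm (R : realType) (n : nat) (i j : 'I_n) (u : config R n) (v : R * R)
  : R * R := (- ((u j).2 * crs (u i) v), (u j).1 * crs (u i) v).
Definition Fm (R : realType) (n : nat) (i j : 'I_n) (x : config R n * (R * R))
  : config R n * (R * R) := (x.1, Tm i j x.1 x.2).
Definition PhiM (R : realType) (n : nat) (i j : 'I_n)
  (C : set (config R n * (R * R))) : set (config R n * (R * R)) := Fm i j @` C.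

Lemma crs_act (R : realType) (g : O2 R) a b :
  crs (o2act g a) (o2act g b) = (if o2refl g then -1 else 1) * crs a b.
Proof.
case: g => c s r h /=; rewrite /crs /o2act /=.
apply: (@eq_trans _ _ ((c ^+ 2 + s ^+ 2) *
   ((if r then -1 else 1) * (a.1 * b.2 - a.2 * b.1)))); last by rewrite h mul1r.
case: r {h} => /=; ring.
Qed.

Lemma Fm_act (R : realType) n (i j : 'I_n) (g : O2 R) x :
  Fm i j (act_tot g x) = act_tot g (Fm i j x).
Proof.
case: x => u v; rewrite /Fm /act_tot /=; congr pair.
rewrite /Tm /act_cfg crs_act.
case: g => c s [] h; rewrite /o2act /=; congr pair; ring.
Qed.

Lemma Phi_orbit (R : realType) n (i j : 'I_n) (x : config R n * (R * R)) :
  PhiM i j (orbit_tot x) = orbit_tot (Fm i j x).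
Proof.
rewrite /PhiM /orbit_tot; apply/seteqP; split => z /=.
- move=> [y [g _ <-] <-]; exists g => //; by rewrite Fm_act.
- move=> [g _ <-]; exists (act_tot g x); first by exists g.
  by rewrite Fm_act.
Qed.

Lemma Fm_E (R : realType) n (l : 'I_n -> R) (i j : 'I_n) x :
  Etilde l i x -> Etilde l j (Fm i j x).
Proof.
case: x => u v [hM _]; split => //=; rewrite /Tm /=; ring.
Qed.

Lemma Fm_inv (R : realType) n (l : 'I_n -> R) (i j : 'I_n) x :
  Etilde l i x -> Fm j i (Fm i j x) = x.
Proof.
case: x => u [a b] [[hu _] /= hv]; rewrite /Fm /=; congr pair.
rewrite /Tm /crs /=.
have hj := hu j; have hi := hu i.
congr pair.
- apply: (@eq_trans _ _ (a * ((u i).1 ^+ 2 + (u i).2 ^+ 2) * ((u j).1 ^+ 2 + (u j).2 ^+ 2)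
     - (u i).1 * ((u i).1 * a + (u i).2 * b) * ((u j).1 ^+ 2 + (u j).2 ^+ 2))).
    ring.
  rewrite hv hi hj; ring.
- apply: (@eq_trans _ _ (b * ((u i).1 ^+ 2 + (u i).2 ^+ 2) * ((u j).1 ^+ 2 + (u j).2 ^+ 2)
     - (u i).2 * ((u i).1 * a + (u i).2 * b) * ((u j).1 ^+ 2 + (u j).2 ^+ 2))).
    ring.
  rewrite hv hi hj; ring.
Qed.

Lemma bproj_F (R : realType) n (i j : 'I_n) (x : config R n * (R * R)) :
  bproj (orbit_tot (Fm i j x)) = bproj (orbit_tot x).
Proof.
rewrite /bproj; apply/seteqP; split => u /= [v [g _ h]].
- exists (act_tot g x).2; exists g => //.
  have <- : (act_tot g (Fm i j x)).1 = u by rewrite h.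
  by rewrite -Fm_act /Fm /=.
- exists (Tm i j u v); exists g => //; rewrite -Fm_act h //.
Qed.

Lemma fix_id (R : realType) n (l : 'I_n -> R) (i : 'I_n) (g : O2 R)
  (u : config R n) :
  (forall (I : {set 'I_n}) (s : 'I_n -> bool), (0 < #|I|)%N ->
     \sum_(k in I) (if s k then l k else - l k) != 0) ->
  Mtilde l u -> act_cfg g u = u -> forall w, o2act g w = w.
Proof.
move=> gen [hu [h1 h2]] hfix.
have hk k : o2act g (u k) = u k by exact: (congr1 (fun f => f k) hfix).
case: g hk {hfix} => c s [] hc hk w; rewrite /o2act /=.
- exfalso.
  pose xi := (u i).1; pose yi := (u i).2.
  have [e1i e2i] : c * xi - (-1) * s * yi = xi /\ s * xi + (-1) * c * yi = yi.
    by have := hk i; rewrite /o2act /= => H; split; [exact: (congr1 fst H) | exact: (congr1 snd H)].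
  pose p k := xi * (u k).1 + yi * (u k).2.
  have hD k : xi * (u k).2 - yi * (u k).1 = 0.
    have [e1k e2k] : c * (u k).1 - (-1) * s * (u k).2 = (u k).1 /\
        s * (u k).1 + (-1) * c * (u k).2 = (u k).2.
      by have := hk k; rewrite /o2act /= => H; split; [exact: (congr1 fst H) | exact: (congr1 snd H)].
    have E : 2 * (xi * (u k).2 - yi * (u k).1) =
      - xi * (s * (u k).1 - (c + 1) * (u k).2) + (u k).1 * (s * xi - (c + 1) * yi)
      - (u k).2 * ((c - 1) * xi + s * yi) + yi * ((c - 1) * (u k).1 + s * (u k).2).
      ring.
    have Z1 : s * (u k).1 - (c + 1) * (u k).2 = 0 by lra.
    have Z2 : s * xi - (c + 1) * yi = 0 by lra.
    have Z3 : (c - 1) * xi + s * yi = 0 by lra.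
    have Z4 : (c - 1) * (u k).1 + s * (u k).2 = 0 by lra.
    move: E; rewrite Z1 Z2 Z3 Z4 !mulr0 subr0 !addr0 => /eqP.
    by rewrite mulf_eq0 pnatr_eq0 /= => /eqP.
  have hi : xi ^+ 2 + yi ^+ 2 = 1 by exact: hu i.
  have hx k : (u k).1 = p k * xi.
    apply: (@eq_trans _ _ ((u k).1 * (1 - (xi ^+ 2 + yi ^+ 2)) - yi * (xi * (u k).2 - yi * (u k).1) + p k * xi)).
      rewrite /p; ring.
    by rewrite hi hD; ring.
  have hy k : (u k).2 = p k * yi.
    apply: (@eq_trans _ _ ((u k).2 * (1 - (xi ^+ 2 + yi ^+ 2)) + xi * (xi * (u k).2 - yi * (u k).1) + p k * yi)).
      rewrite /p; ring.
    by rewrite hi hD; ring.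
  have hp k : p k = 1 \/ p k = -1.
    have : p k ^+ 2 == 1.
      apply/eqP; rewrite -(hu k) hx hy.
      apply: (@eq_trans _ _ (p k ^+ 2 * (xi ^+ 2 + yi ^+ 2))); first by rewrite hi mulr1.
      ring.
    by rewrite sqrf_eq1 => /orP [/eqP -> | /eqP ->]; [left | right].
  pose S := \sum_k l k * p k.
  have S1 : S * xi = 0.
    rewrite -h1 /S mulr_suml; apply: eq_bigr => k _; rewrite hx; ring.
  have S2 : S * yi = 0.
    rewrite -h2 /S mulr_suml; apply: eq_bigr => k _; rewrite hy; ring.
  have S0 : S = 0.
    apply: (@eq_trans _ _ (xi * (S * xi) + yi * (S * yi) + S * (1 - (xi ^+ 2 + yi ^+ 2)))).
      ring.
    by rewrite S1 S2 hi; ring.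
  have := gen [set: 'I_n]%SET (fun k => p k == 1).
  rewrite cardsT card_ord.
  have n0 : (0 < n)%N := leq_ltn_trans (leq0n _) (ltn_ord i).
  move=> /(_ n0); apply/negP; rewrite negbK; apply/eqP.
  apply: (@eq_trans _ _ S); last exact: S0.
  rewrite /S; under eq_bigl do rewrite finset.in_setT.
  apply: eq_bigr => k _; case: (hp k) => ->; rewrite ?eqxx ?mulr1 ?mulrN1 //.
  by case: ifP => // /eqP; lra.
- pose xi := (u i).1; pose yi := (u i).2.
  have [e1 e2] : c * xi - 1 * s * yi = xi /\ s * xi + 1 * c * yi = yi.
    by have := hk i; rewrite /o2act /= => H; split; [exact: (congr1 fst H) | exact: (congr1 snd H)].
  have hi : xi ^+ 2 + yi ^+ 2 = 1 by exact: hu i.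
  have hc1 : c = 1.
    have : (c - 1) * (xi ^+ 2 + yi ^+ 2) = xi * (c * xi - 1 * s * yi - xi) + yi * (s * xi + 1 * c * yi - yi) by ring.
    rewrite hi e1 e2 !subrr !mulr0 addr0 mulr1 => /eqP; rewrite subr_eq0 => /eqP //.
  have hs0 : s = 0.
    have : s * (xi ^+ 2 + yi ^+ 2) = - yi * (c * xi - 1 * s * yi - xi) + xi * (s * xi + 1 * c * yi - yi) by rewrite hc1; ring.
    by rewrite hi e1 e2 !subrr !mulr0 addr0 mulr1.
  rewrite hc1 hs0; case: w => a b /=; congr pair; ring.
Qed.

Lemma o2id_unit (R : realType) : (1 : R) ^+ 2 + 0 ^+ 2 = 1.
Proof. by rewrite expr1n expr0n addr0. Qed.
Definition o2id (R : realType) : O2 R := MkO2 false (o2id_unit R).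

Lemma act_id (R : realType) n (x : config R n * (R * R)) : act_tot (o2id R) x = x.
Proof.
have h w : o2act (o2id R) w = w by case: w => a b; rewrite /o2act /=; congr pair; ring.
case: x => u v; rewrite /act_tot /act_cfg /= h; congr pair.
by apply: funext => k; rewrite h.
Qed.

Lemma orbit_fix (R : realType) n (l : 'I_n -> R) (i j : 'I_n) u v v' :
  (forall (I : {set 'I_n}) (s : 'I_n -> bool), (0 < #|I|)%N ->
     \sum_(k in I) (if s k then l k else - l k) != 0) ->
  Mtilde l u -> orbit_tot (Fm i j (u, v)) = orbit_tot (u, v') -> v' = Tm i j u v.
Proof.
move=> gen hM H.
have : orbit_tot (u, v') (u, v') by exists (o2id R) => //; rewrite act_id.
rewrite -H => -[g _]; rewrite /act_tot /Fm /= => E.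
have h1 : act_cfg g u = u := congr1 fst E.
have h2 : o2act g (Tm i j u v) = v' := congr1 snd E.
by rewrite -h2 (@fix_id R n l i g u gen hM h1).
Qed.

Lemma Tm_lin (R : realType) n (i j : 'I_n) u (a : R) v w :
  Tm i j u (vadd a v w) = vadd a (Tm i j u v) (Tm i j u w).
Proof. by rewrite /Tm /vadd /crs /=; congr pair; ring. Qed.

Lemma prod_bound (R : realType) (a a' b b' A B da db : R) :
  `|a| <= A -> `|b'| <= B -> `|a - a'| <= da -> `|b - b'| <= db ->
  `|a * b - a' * b'| <= A * db + da * B.
Proof.
move=> ha hb hda hdb.
have -> : a * b - a' * b' = a * (b - b') + (a - a') * b' by ring.
apply: (le_trans (ler_normD _ _)); rewrite !normrM.
by apply: lerD; apply: ler_pM; rewrite ?normr_ge0.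
Qed.

Lemma term_le (R : realType) n (u u' : config R n) k :
  `|(u k).1 - (u' k).1| + `|(u k).2 - (u' k).2| <= dist_cfg u u'.
Proof.
rewrite /dist_cfg (bigD1 k) //= lerDl; apply: sumr_ge0 => m _.
by rewrite addr_ge0.
Qed.

Lemma unit_le (R : realType) (x y : R) : x ^+ 2 + y ^+ 2 = 1 -> `|x| <= 1.
Proof.
move=> h.
have h2 : `|x| ^+ 2 <= 1 by rewrite real_normK ?num_real //; have := sqr_ge0 y; lra.
have := normr_ge0 x; nra.
Qed.

Lemma Fm_cont (R : realType) n (l : 'I_n -> R) (i j : 'I_n) x :
  Mtilde l x.1 -> forall e : R, 0 < e -> exists2 d : R, 0 < d &
    forall y, Mtilde l y.1 -> dist_tot x y < d ->
      dist_tot (Fm i j x) (Fm i j y) < e.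
Proof.
case: x => u v /= [hu _] e e0.
pose M := `|v.1| + `|v.2| + 1.
have M1 : 1 <= M by rewrite /M; have := normr_ge0 v.1; have := normr_ge0 v.2; lra.
have K0 : 0 < 13 * M by lra.
exists (Num.min 1 (e / (13 * M))).
  by rewrite lt_min ltr01 divr_gt0.
case=> u' v' /= [hu' _]; rewrite lt_min => /andP [hD1 hDe].
move: hDe; rewrite ltr_pdivlMr // => hDe.
have hD : dist_tot (u, v) (u', v') = dist_cfg u u' + `|v.1 - v'.1| + `|v.2 - v'.2| by [].
set D := dist_tot (u, v) (u', v') in hD1 hDe hD *.
have hc := normr_ge0 (v.1 - v'.1); have hc2 := normr_ge0 (v.2 - v'.2).
have hcfg k : `|(u k).1 - (u' k).1| <= D /\ `|(u k).2 - (u' k).2| <= D.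
  have := term_le u u' k; have := normr_ge0 ((u k).1 - (u' k).1).
  have := normr_ge0 ((u k).2 - (u' k).2); split; lra.
have D0 : 0 <= D by have [h _] := hcfg i; have := normr_ge0 ((u i).1 - (u' i).1); lra.
have hcf0 : 0 <= dist_cfg u u'.
  have := term_le u u' i; have := normr_ge0 ((u i).1 - (u' i).1).
  have := normr_ge0 ((u i).2 - (u' i).2); lra.
have hv1 : `|v.1 - v'.1| <= D by lra.
have hv2 : `|v.2 - v'.2| <= D by lra.
have hcf : dist_cfg u u' <= D by lra.
have hb1 : `|v'.1| <= M.
  have E : v'.1 = v.1 - (v.1 - v'.1) by ring.
  rewrite E; apply: (le_trans (ler_normB _ _)); rewrite /M; have := normr_ge0 v.2; lra.
have hb2 : `|v'.2| <= M.
  have E : v'.2 = v.2 - (v.2 - v'.2) by ring.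
  rewrite E; apply: (le_trans (ler_normB _ _)); rewrite /M; have := normr_ge0 v.1; lra.
have hui1 := unit_le (hu i); have hui2 : `|(u i).2| <= 1 by apply: (@unit_le _ _ (u i).1); rewrite addrC; exact: hu i.
have huj1 := unit_le (hu j); have huj2 : `|(u j).2| <= 1 by apply: (@unit_le _ _ (u j).1); rewrite addrC; exact: hu j.
have hu'i1 := unit_le (hu' i); have hu'i2 : `|(u' i).2| <= 1 by apply: (@unit_le _ _ (u' i).1); rewrite addrC; exact: hu' i.
have pb1 := prod_bound hui1 hb2 (proj1 (hcfg i)) hv2.
have pb2 := prod_bound hui2 hb1 (proj2 (hcfg i)) hv1.
have hpp : `|crs (u i) v - crs (u' i) v'| <= 2 * (D + D * M).
  have -> : crs (u i) v - crs (u' i) v' =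
    ((u i).1 * v.2 - (u' i).1 * v'.2) - ((u i).2 * v.1 - (u' i).2 * v'.1)
    by rewrite /crs; ring.
  apply: (le_trans (ler_normB _ _)); lra.
have hp' : `|crs (u' i) v'| <= 2 * M.
  rewrite /crs; apply: (le_trans (ler_normB _ _)); rewrite !normrM.
  have : `|(u' i).1| * `|v'.2| <= 1 * M by apply: ler_pM; rewrite ?normr_ge0.
  have : `|(u' i).2| * `|v'.1| <= 1 * M by apply: ler_pM; rewrite ?normr_ge0.
  lra.
have t1 := prod_bound huj2 hp' (proj2 (hcfg j)) hpp.
have t2 := prod_bound huj1 hp' (proj1 (hcfg j)) hpp.
have DM : D <= D * M by apply: ler_peMr.
have -> : dist_tot (Fm i j (u, v)) (Fm i j (u', v')) =
  dist_cfg u u' + `|(u j).2 * crs (u i) v - (u' j).2 * crs (u' i) v'|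
  + `|(u j).1 * crs (u i) v - (u' j).1 * crs (u' i) v'|.
  rewrite /dist_tot /Fm /Tm /=; congr (_ + _ + _).
  by rewrite -normrN; congr `|_|; ring.
have E13 : D * (13 * M) = 13 * (D * M) by ring.
rewrite E13 in hDe.
lra.
Qed.

Lemma Phi_cont (R : realType) n (l : 'I_n -> R) (i j : 'I_n) :
  quot_cont (@dist_tot R n) (Etilde l i) (Etilde l j) (@orbit_tot R n) (PhiM i j).
Proof.
move=> F0 hF x hx [_ /= hFx]; rewrite Phi_orbit in hFx.
have hE z : Etilde l i z -> Etilde l j (Fm i j z) := @Fm_E R n l i j z.
have [e e0 he] := hF (Fm i j x) (hE _ hx) (conj (hE _ hx) hFx).
have [d d0 hd] := @Fm_cont R n l i j x hx.1 e e0.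
exists d => // y hy hxy; split => //; rewrite Phi_orbit.
by have [] := he (Fm i j y) (hE _ hy) (hd y hy.1 hxy).
Qed.

Theorem mainTheorem2 (R : realType) (n : nat) (l : 'I_n -> R) :
  (4 <= n)%N ->
  (forall k, 0 < l k) ->
  (forall (I : {set 'I_n}) (s : 'I_n -> bool), (0 < #|I|)%N ->
     \sum_(k in I) (if s k then l k else - l k) != 0) ->
  forall i j : 'I_n, exists Phi Psi, line_bundle_iso l i j Phi Psi.
Proof.
move=> n4 lpos gen i j.
exists (PhiM i j), (PhiM j i).
have hE a b z : Etilde l a z -> Etilde l b (Fm a b z) := @Fm_E R n l a b z.
split; [|split; [|split; [|split; [|split; [|split; [|split]]]]]].
- move=> _ [x hx <-]; rewrite Phi_orbit; exists (Fm i j x) => //; exact: hE.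
- move=> _ [x hx <-]; rewrite Phi_orbit; exists (Fm j i x) => //; exact: hE.
- move=> _ [x hx <-]; by rewrite !Phi_orbit (@Fm_inv R n l i j x hx).
- move=> _ [x hx <-]; by rewrite !Phi_orbit (@Fm_inv R n l j i x hx).
- move=> _ [x hx <-]; rewrite Phi_orbit; exact: bproj_F.
- move=> u a v w v' w' hv hw hv' hw' e1 e2.
  rewrite Phi_orbit in e1; rewrite Phi_orbit in e2; rewrite Phi_orbit.
  have hM : Mtilde l u := hv.1.
  rewrite (@orbit_fix R n l i j u v v' gen hM e1) (@orbit_fix R n l i j u w w' gen hM e2).
  by rewrite /Fm /= Tm_lin.
- exact: Phi_cont.
- exact: Phi_cont.
Qed.
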